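(* Let $q$ be a complex number with $|q|<1$. Then \[ \sum_{n\geq 0} q^{2n} (q^{4n+4};q^4)_\infty (q;q)_{2n+1} = \frac{2(1-q)(q^4;q^4)_\infty}{1+q^3}- \frac{(q;q)_\infty}{1+q^3}, \] and \[ (1+q^3) \sum_{n\geq 0} \frac{(-q^2;q^2)_n\, q^{4n+2}}{(q;q^2)_{n+1}} = \frac{(q^4;q^4)_\infty}{(q^2;q)_\infty}-1 . \]
   Context: For a complex number $a$ and $|q|<1$: $(a;q)_0=1$, $(a;q)_n=\prod_{j=0}^{n-1}(1-aq^j)$ for integers $n\ge 1$, and $(a;q)_\infty=\prod_{j=0}^{\infty}(1-aq^j)$. *)

(* Defs.v *)
From Stdlib Require Import Reals ClassicalEpsilon.
From Coquelicot Require Import Coquelicot.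
Open Scope C_scope.

Fixpoint qpoch (a q : C) (n : nat) : C :=
  match n with
  | O => 1
  | S m => qpoch a q m * (1 - a * q ^ m)
  end.

(* infinite q-Pochhammer symbol: the limit of the partial products
   (a;q)_n as n -> oo (chosen by epsilon; it is the limit whenever it exists) *)
Definition qpoch_inf (a q : C) : C :=
  epsilon (inhabits (RtoC 0))
    (fun l => filterlim (qpoch a q) eventually (locally l)).

(* Main.v *)
Require Import Defs.
From Stdlib Require Import Reals Lra Lia ClassicalEpsilon.
From Coquelicot Require Import Coquelicot.
Open Scope C_scope.

Definition cv (u : nat -> C) (l : C) := is_lim_seq (fun n => Cmod (u n - l)) 0%R.

Lemma cv_filterlim u l : cv u l <-> filterlim u eventually (locally l).
Proof.
  unfold cv; rewrite <- is_lim_seq_spec.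
  rewrite (filterlim_locally_ball_norm (K:=C_AbsRing) (U:=C_NormedModule)).
  simpl; split; intros H eps; destruct (H eps) as [N HN]; exists N; intros n Hn;
  specialize (HN n Hn).
  - unfold ball_norm. change (Cmod (u n - l) < eps)%R.
    rewrite Rminus_0_r, Rabs_pos_eq in HN; auto. apply Cmod_ge_0.
  - unfold ball_norm in HN. change (Cmod (u n - l) < eps)%R in HN.
    rewrite Rminus_0_r, Rabs_pos_eq; auto. apply Cmod_ge_0.
Qed.

Lemma cv_bound u l r : (forall n, Cmod (u n - l) <= r n)%R -> is_lim_seq r 0%R -> cv u l.
Proof.
  intros H Hr. unfold cv.
  apply is_lim_seq_le_le with (u := fun _ => 0%R) (w := r); auto.
  intros n; split; auto. apply Cmod_ge_0. apply is_lim_seq_const.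
Qed.

Lemma cv_bound_loc u l r : eventually (fun n => Cmod (u n - l) <= r n)%R -> is_lim_seq r 0%R -> cv u l.
Proof.
  intros H Hr. unfold cv.
  apply is_lim_seq_le_le_loc with (u := fun _ => 0%R) (w := r); auto.
  destruct H as [N HN]; exists N; intros n Hn; split; auto. apply Cmod_ge_0.
  apply is_lim_seq_const.
Qed.

Lemma cv_ext u v l : (forall n, u n = v n) -> cv u l -> cv v l.
Proof. intros H Hu; unfold cv; eapply is_lim_seq_ext; [|exact Hu]; intros n; simpl; now rewrite H. Qed.

Lemma cv_const c : cv (fun _ => c) c.
Proof.
  apply cv_bound with (r := fun _ => 0%R).
  - intros n. replace (c - c) with (RtoC 0) by ring. rewrite Cmod_0. lra.
  - apply is_lim_seq_const.
Qed.

Lemma cv_plus u v l m : cv u l -> cv v m -> cv (fun n => u n + v n) (l + m).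
Proof.
  intros Hu Hv. apply cv_bound with (r := fun n => (Cmod (u n - l) + Cmod (v n - m))%R).
  - intros n. replace (u n + v n - (l + m)) with ((u n - l) + (v n - m)) by ring. apply Cmod_triangle.
  - replace 0%R with (0 + 0)%R by ring. apply is_lim_seq_plus'; auto.
Qed.

Lemma cv_opp u l : cv u l -> cv (fun n => - u n) (- l).
Proof.
  intros Hu. apply cv_bound with (r := fun n => Cmod (u n - l)); auto.
  intros n. replace (- u n - - l) with (- (u n - l)) by ring. rewrite Cmod_opp; lra.
Qed.

Lemma cv_minus u v l m : cv u l -> cv v m -> cv (fun n => u n - v n) (l - m).
Proof. intros; apply cv_plus; auto; apply cv_opp; auto. Qed.

Lemma cv_mult u v l m : cv u l -> cv v m -> cv (fun n => u n * v n) (l * m).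
Proof.
  intros Hu Hv. apply cv_bound with (r := fun n => (Cmod (u n - l) * Cmod (v n - m) + Cmod (u n - l) * Cmod m + Cmod l * Cmod (v n - m))%R).
  - intros n. replace (u n * v n - l * m) with ((u n - l) * (v n - m) + (u n - l) * m + l * (v n - m)) by ring.
    eapply Rle_trans; [apply Cmod_triangle|]. rewrite !Cmod_mult.
    apply Rplus_le_compat_r. eapply Rle_trans; [apply Cmod_triangle|]. rewrite !Cmod_mult. lra.
  - replace 0%R with (0 * 0 + 0 * Cmod m + Cmod l * 0)%R by ring.
    apply is_lim_seq_plus'; [apply is_lim_seq_plus'|].
    + apply is_lim_seq_mult'; auto.
    + apply is_lim_seq_mult'; auto. apply is_lim_seq_const.
    + apply is_lim_seq_mult'; auto. apply is_lim_seq_const.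
Qed.

Lemma cv_inv u l : cv u l -> l <> 0 -> cv (fun n => / u n) (/ l).
Proof.
  intros Hu Hl. assert (Hlp : (0 < Cmod l)%R) by now apply Cmod_gt_0.
  apply cv_bound_loc with (r := fun n => (Cmod (u n - l) * (2 / (Cmod l * Cmod l)))%R).
  - apply is_lim_seq_spec in Hu. destruct (Hu (mkposreal (Cmod l / 2) ltac:(lra))) as [N HN].
    exists N; intros n Hn. specialize (HN n Hn). simpl in HN. rewrite Rminus_0_r, Rabs_pos_eq in HN by apply Cmod_ge_0.
    assert (Hun : (Cmod l / 2 <= Cmod (u n))%R).
    { assert (Cmod l <= Cmod (u n) + Cmod (l - u n))%R.
      { replace l with (u n + (l - u n)) at 1 by ring. apply Cmod_triangle. }
      replace (l - u n) with (- (u n - l)) in H by ring. rewrite Cmod_opp in H. lra. }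
    assert (u n <> 0). { intros E; rewrite E, Cmod_0 in Hun; lra. }
    replace (/ u n - / l) with ((l - u n) * / u n * / l) by (field; auto).
    rewrite !Cmod_mult, !Cmod_inv by auto.
    replace (l - u n) with (- (u n - l)) by ring. rewrite Cmod_opp.
    assert (0 <= Cmod (u n - l))%R by apply Cmod_ge_0.
    rewrite Rmult_assoc. apply Rmult_le_compat_l; auto.
    replace (2 / (Cmod l * Cmod l))%R with (/ (Cmod l / 2) * / Cmod l)%R by (field; lra).
    apply Rmult_le_compat_r. left; apply Rinv_0_lt_compat; auto.
    apply Rinv_le_contravar; lra.
  - replace 0%R with (0 * (2 / (Cmod l * Cmod l)))%R by ring.
    apply is_lim_seq_mult'; auto. apply is_lim_seq_const.
Qed.

Lemma cv_div u v l m : cv u l -> cv v m -> m <> 0 -> cv (fun n => u n / v n) (l / m).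
Proof. intros; apply cv_mult; auto; apply cv_inv; auto. Qed.

Lemma cv_subseq u l phi : (forall n, (n <= phi n)%nat) -> cv u l -> cv (fun n => u (phi n)) l.
Proof.
  intros Hphi Hu. unfold cv. apply (is_lim_seq_subseq (fun n => Cmod (u n - l))); auto.
  intros P [N HN]. exists N. intros n Hn. apply HN. specialize (Hphi n). lia.
Qed.

Lemma cv_unique u l m : cv u l -> cv u m -> l = m.
Proof.
  intros H1 H2. apply cv_filterlim in H1; apply cv_filterlim in H2.
  exact (filterlim_locally_unique (K:=C_AbsRing) (V:=C_NormedModule) u l m H1 H2).
Qed.

Lemma cv_le u l c r : cv u l -> (forall n, Cmod (u n - c) <= r)%R -> (Cmod (l - c) <= r)%R.
Proof.
  intros Hu H.
  assert (Hw : is_lim_seq (fun n => Cmod (u n - c)) (Cmod (l - c))).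
  { apply is_lim_seq_le_le with (u := fun n => (Cmod (l - c) - Cmod (u n - l))%R)
         (w := fun n => (Cmod (l - c) + Cmod (u n - l))%R).
    - intros n; split.
      + assert (Cmod (l - c) <= Cmod (u n - c) + Cmod (l - u n))%R.
        { replace (l - c) with ((u n - c) + (l - u n)) by ring. apply Cmod_triangle. }
        replace (l - u n) with (- (u n - l)) in H0 by ring. rewrite Cmod_opp in H0. lra.
      + replace (u n - c) with ((l - c) + (u n - l)) by ring. apply Cmod_triangle.
    - pose proof (is_lim_seq_minus' _ _ _ _ (is_lim_seq_const (Cmod (l - c))) Hu) as H1.
      rewrite Rminus_0_r in H1. exact H1.
    - pose proof (is_lim_seq_plus' _ _ _ _ (is_lim_seq_const (Cmod (l - c))) Hu) as H1.
      rewrite Rplus_0_r in H1. exact H1. }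
  assert (Rbar_le (Cmod (l - c)) r).
  { eapply is_lim_seq_le; [|exact Hw|apply is_lim_seq_const]. exact H. }
  exact H0.
Qed.

Lemma cv_geom q : (Cmod q < 1)%R -> cv (fun n => q ^ n) 0.
Proof.
  intros Hq. apply cv_bound with (r := fun n => (Cmod q ^ n)%R).
  - intros n. replace (q ^ n - 0) with (q ^ n) by ring. rewrite Cmod_pow; lra.
  - apply is_lim_seq_geom. rewrite Rabs_pos_eq; auto. apply Cmod_ge_0.
Qed.

Lemma qpoch_S a q n : qpoch a q (S n) = qpoch a q n * (1 - a * q ^ n).
Proof. reflexivity. Qed.

Lemma pow_le1 x n : (0 <= x <= 1)%R -> (x ^ n <= 1)%R.
Proof. intros H; induction n; simpl; [lra|]. assert (0 <= x ^ n)%R by (apply pow_le; lra). nra. Qed.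

Lemma pow_decr x n m : (0 <= x <= 1)%R -> (n <= m)%nat -> (x ^ m <= x ^ n)%R.
Proof.
  intros H Hnm. replace m with (n + (m - n))%nat by lia. rewrite pow_add.
  assert (0 <= x ^ n)%R by (apply pow_le; lra).
  assert (x ^ (m - n) <= 1)%R by (apply pow_le1; lra).
  assert (0 <= x ^ (m - n))%R by (apply pow_le; lra). nra.
Qed.

Lemma qpoch_bound q b n : (Cmod q < 1)%R ->
  (Cmod (qpoch b q n - 1) <= exp (Cmod b * (1 - Cmod q ^ n) / (1 - Cmod q)) - 1)%R.
Proof.
  intros Hq. induction n as [|n IH].
  - simpl. replace (RtoC 1 - 1) with (RtoC 0) by ring. rewrite Cmod_0.
    replace (Cmod b * (1 - 1) / (1 - Cmod q))%R with 0%R by (field; lra). rewrite exp_0; lra.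
  - rewrite qpoch_S.
    set (p := qpoch b q n) in *.
    set (x := (Cmod b * Cmod q ^ n)%R).
    set (s := (Cmod b * (1 - Cmod q ^ n) / (1 - Cmod q))%R) in *.
    assert (Hx : (0 <= x)%R). { unfold x. apply Rmult_le_pos. apply Cmod_ge_0. apply pow_le, Cmod_ge_0. }
    assert (Hs : (Cmod b * (1 - Cmod q ^ S n) / (1 - Cmod q) = s + x)%R).
    { unfold s, x. simpl. field. lra. }
    rewrite Hs, exp_plus.
    replace (p * (1 - b * q ^ n) - 1) with ((p - 1) * (1 - b * q ^ n) + - (b * q ^ n)) by ring.
    eapply Rle_trans; [apply Cmod_triangle|]. rewrite Cmod_mult, Cmod_opp.
    assert (Hbq : Cmod (b * q ^ n) = x). { unfold x; now rewrite Cmod_mult, Cmod_pow. }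
    assert (H1 : (Cmod (1 - b * q ^ n) <= 1 + x)%R).
    { eapply Rle_trans; [apply Cmod_triangle|]. rewrite Cmod_opp, Hbq, Cmod_1. lra. }
    assert (Hex : (1 + x <= exp x)%R) by apply exp_ineq1_le.
    assert (He : (1 <= exp s)%R).
    { assert (0 <= s)%R. { unfold s. apply Rmult_le_pos. apply Rmult_le_pos. apply Cmod_ge_0.
        assert (Cmod q ^ n <= 1)%R. { apply pow_le1; split; [apply Cmod_ge_0|lra]. } lra.
        left; apply Rinv_0_lt_compat; lra. }
      pose proof (exp_ineq1_le s). lra. }
    assert (0 <= Cmod (p - 1))%R by apply Cmod_ge_0.
    rewrite Hbq.
    apply Rle_trans with ((exp s - 1) * (1 + x) + x)%R.
    + apply Rplus_le_compat_r. apply Rle_trans with (Cmod (p - 1) * (1 + x))%R.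
      apply Rmult_le_compat_l; auto. apply Rmult_le_compat_r; lra.
    + assert (exp s * (1 + x) <= exp s * exp x)%R. { apply Rmult_le_compat_l; lra. }
      nra.
Qed.

Lemma qpoch_bound2 q b n : (Cmod q < 1)%R ->
  (Cmod (qpoch b q n - 1) <= exp (Cmod b / (1 - Cmod q)) - 1)%R.
Proof.
  intros Hq. eapply Rle_trans; [apply qpoch_bound; auto|].
  apply Rplus_le_compat_r.
  assert (Cmod b * (1 - Cmod q ^ n) / (1 - Cmod q) <= Cmod b / (1 - Cmod q))%R.
  { unfold Rdiv. apply Rmult_le_compat_r. left; apply Rinv_0_lt_compat; lra.
    assert (0 <= Cmod q ^ n)%R by (apply pow_le, Cmod_ge_0).
    assert (0 <= Cmod b)%R by apply Cmod_ge_0. nra. }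
  destruct H as [H|H]; [left; apply exp_increasing; auto| rewrite H; lra].
Qed.

Lemma qpoch_norm_bound q b n : (Cmod q < 1)%R ->
  (Cmod (qpoch b q n) <= exp (Cmod b / (1 - Cmod q)))%R.
Proof.
  intros Hq. pose proof (qpoch_bound2 q b n Hq).
  replace (qpoch b q n) with ((qpoch b q n - 1) + 1) by ring.
  eapply Rle_trans; [apply Cmod_triangle|]. rewrite Cmod_1. lra.
Qed.

Lemma cv_shift u l : cv (fun n => u (S n)) l -> cv u l.
Proof. unfold cv; intros H. apply is_lim_seq_incr_1. exact H. Qed.

Lemma cv_shift' u l : cv u l -> cv (fun n => u (S n)) l.
Proof. unfold cv; intros H. apply (is_lim_seq_incr_1 (fun n => Cmod (u n - l))). exact H. Qed.

Lemma qpoch_ex q b : (Cmod q < 1)%R -> exists l, cv (qpoch b q) l.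
Proof.
  intros Hq.
  set (M := exp (Cmod b / (1 - Cmod q))).
  set (d := fun n => qpoch b q (S n) - qpoch b q n).
  assert (Hd : ex_series (K:=C_AbsRing) (V:=C_CompleteNormedModule) d).
  { apply ex_series_le with (b := fun n => (M * Cmod b * Cmod q ^ n)%R).
    - intros n. change (Cmod (d n) <= M * Cmod b * Cmod q ^ n)%R.
      unfold d. rewrite qpoch_S.
      replace (qpoch b q n * (1 - b * q ^ n) - qpoch b q n) with (- (qpoch b q n * (b * q ^ n))) by ring.
      rewrite Cmod_opp, !Cmod_mult, Cmod_pow. rewrite Rmult_assoc.
      apply Rmult_le_compat_r. apply Rmult_le_pos. apply Cmod_ge_0. apply pow_le, Cmod_ge_0.
      apply qpoch_norm_bound; auto.
    - apply (ex_series_scal_l (K:=R_AbsRing) (V:=R_NormedModule) (M * Cmod b)%R (fun n => (Cmod q ^ n)%R)).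
      exists (/ (1 - Cmod q))%R. apply is_series_geom. rewrite Rabs_pos_eq; auto. apply Cmod_ge_0. }
  destruct Hd as [L HL].
  exists (L + 1). apply cv_shift.
  assert (Hs : forall n, sum_n d n = qpoch b q (S n) - 1).
  { induction n. rewrite sum_O. unfold d. simpl. ring.
    rewrite sum_Sn, IHn. unfold d. change (qpoch b q (S n) - 1 + (qpoch b q (S (S n)) - qpoch b q (S n)) = qpoch b q (S (S n)) - 1). ring. }
  assert (Hc : cv (sum_n d) L). { apply cv_filterlim. exact HL. }
  apply cv_ext with (u := fun n => sum_n d n + 1).
  intros n; rewrite Hs; ring.
  apply cv_plus; auto. apply cv_const.
Qed.

Lemma qpoch_inf_cv q b : (Cmod q < 1)%R -> cv (qpoch b q) (qpoch_inf b q).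
Proof.
  intros Hq. destruct (qpoch_ex q b Hq) as [l Hl].
  apply cv_filterlim. unfold qpoch_inf.
  apply (epsilon_spec (inhabits (RtoC 0)) (fun l => filterlim (qpoch b q) eventually (locally l))).
  exists l. apply cv_filterlim; auto.
Qed.

Lemma qpoch_shift a q n : qpoch a q (S n) = (1 - a) * qpoch (a * q) q n.
Proof.
  induction n. simpl. ring.
  rewrite qpoch_S, IHn, qpoch_S. rewrite Cpow_S. ring.
Qed.

Lemma qpoch_inf_shift a q : (Cmod q < 1)%R -> qpoch_inf a q = (1 - a) * qpoch_inf (a * q) q.
Proof.
  intros Hq. apply (cv_unique (fun n => qpoch a q (S n))).
  - apply cv_shift'. apply qpoch_inf_cv; auto.
  - apply cv_ext with (u := fun n => (1 - a) * qpoch (a * q) q n).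
    intros; now rewrite qpoch_shift.
    apply cv_mult. apply cv_const. apply qpoch_inf_cv; auto.
Qed.

Lemma qpoch_inf_split a q K : (Cmod q < 1)%R -> qpoch_inf a q = qpoch a q K * qpoch_inf (a * q ^ K) q.
Proof.
  intros Hq. induction K.
  - simpl. replace (a * 1) with a by ring. ring.
  - rewrite IHK, qpoch_inf_shift with (a := a * q ^ K) by auto.
    rewrite qpoch_S, Cpow_S. replace (a * q ^ K * q) with (a * (q * q ^ K)) by ring. ring.
Qed.

Lemma qpoch_inf_bound q b : (Cmod q < 1)%R ->
  (Cmod (qpoch_inf b q - 1) <= exp (Cmod b / (1 - Cmod q)) - 1)%R.
Proof.
  intros Hq. apply (cv_le (qpoch b q)). apply qpoch_inf_cv; auto.
  intros n; apply qpoch_bound2; auto.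
Qed.

Lemma exp_m1_bound t : (0 <= t)%R -> (exp t - 1 <= t * exp t)%R.
Proof.
  intros Ht. pose proof (exp_ineq1_le (- t)).
  assert (exp (- t) * exp t = 1)%R. { rewrite <- exp_plus. replace (- t + t)%R with 0%R by ring. apply exp_0. }
  pose proof (exp_pos t). nra.
Qed.

Definition Kq (q : C) := (exp (1 / (1 - Cmod q)) / (1 - Cmod q))%R.

Lemma Kq_pos q : (Cmod q < 1)%R -> (0 < Kq q)%R.
Proof. intros; unfold Kq. apply Rdiv_lt_0_compat. apply exp_pos. lra. Qed.

Lemma qpoch_inf_small q b : (Cmod q < 1)%R -> (Cmod b <= 1)%R ->
  (Cmod (qpoch_inf b q - 1) <= Cmod b * Kq q)%R.
Proof.
  intros Hq Hb. eapply Rle_trans; [apply qpoch_inf_bound; auto|].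
  assert (0 <= Cmod b)%R by apply Cmod_ge_0.
  assert (Ht : (0 <= Cmod b / (1 - Cmod q))%R). { apply Rdiv_le_0_compat; lra. }
  eapply Rle_trans; [apply exp_m1_bound; auto|].
  unfold Kq. unfold Rdiv. rewrite (Rmult_comm (exp _)), <- Rmult_assoc, (Rmult_comm (Cmod b)), Rmult_assoc.
  assert (Hu : (0 < / (1 - Cmod q))%R) by (apply Rinv_0_lt_compat; lra).
  assert (Hle : (exp (/ (1 - Cmod q) * Cmod b) <= exp (1 * / (1 - Cmod q)))%R).
  { assert (/ (1 - Cmod q) * Cmod b <= 1 * / (1 - Cmod q))%R by nra.
    destruct H0 as [H0|H0]; [left; apply exp_increasing; auto| rewrite H0; lra]. }
  assert (0 <= / (1 - Cmod q) * Cmod b)%R by nra.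
  pose proof (exp_pos (/ (1 - Cmod q) * Cmod b)).
  replace (/ (1 - Cmod q) * (Cmod b * exp (/ (1 - Cmod q) * Cmod b)))%R
    with ((/ (1 - Cmod q) * Cmod b) * exp (/ (1 - Cmod q) * Cmod b))%R by ring.
  apply Rmult_le_compat_l; auto.
Qed.

Lemma one_minus_nz z : (Cmod z < 1)%R -> 1 - z <> 0.
Proof.
  intros H E. assert (z = 1).
  { replace z with (1 - (1 - z)) by ring. rewrite E. ring. }
  subst z. rewrite Cmod_1 in H. lra.
Qed.

Lemma qpoch_nz a q n : (Cmod a < 1)%R -> (Cmod q <= 1)%R -> qpoch a q n <> 0.
Proof.
  intros Ha Hq. induction n.
  - simpl. exact C1_nz.
  - rewrite qpoch_S. apply Cmult_neq_0; auto. apply one_minus_nz.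
    rewrite Cmod_mult, Cmod_pow.
    assert (Cmod q ^ n <= 1)%R by (apply pow_le1; split; [apply Cmod_ge_0|lra]).
    assert (0 <= Cmod a)%R by apply Cmod_ge_0.
    assert (0 <= Cmod q ^ n)%R by (apply pow_le, Cmod_ge_0). nra.
Qed.

Lemma qpoch_inf_nz a q : (Cmod a < 1)%R -> (Cmod q < 1)%R -> qpoch_inf a q <> 0.
Proof.
  intros Ha Hq.
  assert (HK := Kq_pos q Hq).
  assert (Hg : is_lim_seq (fun n => (Cmod q ^ n)%R) 0%R).
  { apply is_lim_seq_geom. rewrite Rabs_pos_eq; auto. apply Cmod_ge_0. }
  apply is_lim_seq_spec in Hg.
  destruct (Hg (mkposreal (/ Kq q) ltac:(apply Rinv_0_lt_compat; lra))) as [N HN].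
  specialize (HN N (le_n N)). simpl in HN. rewrite Rminus_0_r, Rabs_pos_eq in HN by (apply pow_le, Cmod_ge_0).
  rewrite (qpoch_inf_split a q N Hq).
  apply Cmult_neq_0. apply qpoch_nz; lra.
  assert (Hb : (Cmod (a * q ^ N) <= Cmod q ^ N)%R).
  { rewrite Cmod_mult, Cmod_pow. assert (0 <= Cmod q ^ N)%R by (apply pow_le, Cmod_ge_0).
    assert (0 <= Cmod a)%R by apply Cmod_ge_0. nra. }
  assert (Hb1 : (Cmod (a * q ^ N) <= 1)%R).
  { assert (Cmod q ^ N <= 1)%R by (apply pow_le1; split; [apply Cmod_ge_0|lra]). lra. }
  pose proof (qpoch_inf_small q (a * q ^ N) Hq Hb1) as H.
  intros E. rewrite E in H. replace (RtoC 0 - 1) with (- (RtoC 1)) in H by ring.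
  rewrite Cmod_opp, Cmod_1 in H.
  assert (Cmod q ^ N * Kq q < 1)%R.
  { apply Rmult_lt_compat_r with (r := Kq q) in HN; auto. rewrite Rinv_l in HN; lra. }
  assert (Cmod (a * q ^ N) * Kq q <= Cmod q ^ N * Kq q)%R by (apply Rmult_le_compat_r; lra).
  lra.
Qed.

Lemma qpoch_E_G q N : qpoch (- q ^ 2) (q ^ 2) N * qpoch (q ^ 2) (q ^ 2) N = qpoch (q ^ 4) (q ^ 4) N.
Proof.
  induction N. simpl. ring.
  rewrite !qpoch_S, <- IHN.
  replace (q ^ 4) with (q ^ 2 * q ^ 2) by ring. rewrite Cpow_mult_l. ring.
Qed.

Lemma qpoch_D_G q N : qpoch q (q ^ 2) N * qpoch (q ^ 2) (q ^ 2) N = qpoch q q (2 * N).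
Proof.
  induction N. simpl. ring.
  replace (2 * S N)%nat with (S (S (2 * N))) by lia.
  rewrite !qpoch_S, <- IHN. rewrite (Cpow_S q (2 * N)), (Cpow_mult_r q 2 N). ring.
Qed.

Lemma pow_lim_sub q (k : nat) : (Cmod q < 1)%R -> cv (fun N => q ^ (S k * N)) 0.
Proof.
  intros Hq. apply (cv_subseq (fun n => q ^ n) 0 (fun N => (S k * N)%nat)). intros; lia. apply cv_geom; auto.
Qed.

Lemma Cmod_pow_lt1 q k : (Cmod q < 1)%R -> (0 < k)%nat -> (Cmod (q ^ k) < 1)%R.
Proof.
  intros Hq Hk. rewrite Cmod_pow. apply pow_lt_1_compat; auto. split; auto. apply Cmod_ge_0.
Qed.

Lemma one_plus_nz z : (Cmod z < 1)%R -> 1 + z <> 0.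
Proof. intros H. replace (1 + z) with (1 - - z) by ring. apply one_minus_nz. rewrite Cmod_opp; auto. Qed.

Section Part1.
Variable q : C.
Hypothesis hq : (Cmod q < 1)%R.

Let T N := qpoch_inf (q ^ (4 * N + 4)) (q ^ 4).
Let P := qpoch_inf (q ^ 4) (q ^ 4).
Let y (x : C) := 1 + (1 - q) * x - q * x * x.
Let R N := qpoch q q (2 * N) * T N * y (q ^ (2 * N)).
Let term (n : nat) := q ^ (2 * n) * qpoch_inf (q ^ (4 * n + 4)) (q ^ 4) * qpoch q q (2 * n + 1).

Lemma T_step N : T N = (1 - q ^ 4 * q ^ (2 * N) * q ^ (2 * N)) * T (S N).
Proof.
  unfold T. rewrite qpoch_inf_shift by (apply Cmod_pow_lt1; auto; lia).
  replace (q ^ (4 * N + 4) * q ^ 4) with (q ^ (4 * S N + 4)).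
  replace (q ^ (4 * N + 4)) with (q ^ 4 * q ^ (2 * N) * q ^ (2 * N)). reflexivity.
  rewrite <- !Cpow_add_r. f_equal. lia.
  rewrite <- !Cpow_add_r. f_equal. lia.
Qed.

Lemma step1 N : (1 + q ^ 3) * term N = R N - R (S N).
Proof.
  unfold term, R. fold (T N). rewrite (T_step N).
  set (X := q ^ (2 * N)).
  replace (2 * N + 1)%nat with (S (2 * N)) by lia.
  replace (2 * S N)%nat with (S (S (2 * N))) by lia.
  rewrite !qpoch_S.
  replace (q ^ S (S (2 * N))) with (q ^ 2 * X) by (unfold X; rewrite <- Cpow_add_r; f_equal; lia).
  replace (q ^ S (2 * N)) with (q * X) by (unfold X; now rewrite Cpow_S).
  fold X. unfold y. ring.
Qed.

Lemma R0 : R 0 = 2 * (1 - q) * P.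
Proof.
  unfold R, T, P, y. simpl (2 * 0)%nat. simpl (4 * 0 + 4)%nat. simpl. ring.
Qed.

Lemma partial1 N : (1 + q ^ 3) * sum_n term N = 2 * (1 - q) * P - R (S N).
Proof.
  induction N.
  - rewrite sum_O. rewrite step1, R0. ring.
  - rewrite sum_Sn. change (plus (sum_n term N) (term (S N))) with (sum_n term N + term (S N)).
    rewrite Cmult_plus_distr_l, IHN, step1. ring.
Qed.

Lemma T_lim : cv T 1.
Proof.
  assert (Hq4 : (Cmod (q ^ 4) < 1)%R) by (apply Cmod_pow_lt1; auto; lia).
  apply cv_bound with (r := fun N => (Cmod q ^ N * Kq (q ^ 4))%R).
  - intros N. unfold T.
    assert (Hb : (Cmod (q ^ (4 * N + 4)) <= Cmod q ^ N)%R).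
    { rewrite Cmod_pow. apply pow_decr. split; [apply Cmod_ge_0|lra]. lia. }
    assert (Hb1 : (Cmod (q ^ (4 * N + 4)) <= 1)%R).
    { rewrite Cmod_pow. apply pow_le1. split; [apply Cmod_ge_0|lra]. }
    eapply Rle_trans; [apply qpoch_inf_small; auto|].
    apply Rmult_le_compat_r; auto. left; apply Kq_pos; auto.
  - replace 0%R with (0 * Kq (q ^ 4))%R by ring. apply is_lim_seq_mult'.
    apply is_lim_seq_geom. rewrite Rabs_pos_eq; auto. apply Cmod_ge_0. apply is_lim_seq_const.
Qed.

Lemma R_lim : cv R (qpoch_inf q q).
Proof.
  unfold R. replace (qpoch_inf q q) with (qpoch_inf q q * 1 * y 0) by (unfold y; ring).
  apply cv_mult; [apply cv_mult|].
  - apply (cv_subseq (qpoch q q) _ (fun N => (2 * N)%nat)). intros; lia. apply qpoch_inf_cv; auto.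
  - apply T_lim.
  - unfold y. apply cv_minus; [apply cv_plus|].
    + apply cv_const.
    + apply cv_mult. apply cv_const. apply (pow_lim_sub q 1); auto.
    + apply cv_mult. apply cv_mult. apply cv_const. apply (pow_lim_sub q 1); auto. apply (pow_lim_sub q 1); auto.
Qed.

Lemma part1 : is_series term (2 * (1 - q) * P / (1 + q ^ 3) - qpoch_inf q q / (1 + q ^ 3)).
Proof.
  assert (H3 : 1 + q ^ 3 <> 0) by (apply one_plus_nz, Cmod_pow_lt1; auto; lia).
  apply cv_filterlim.
  apply cv_ext with (u := fun N => (2 * (1 - q) * P - R (S N)) / (1 + q ^ 3)).
  - intros N. change (@sum_n _ term N) with (@sum_n C_AbelianMonoid term N). rewrite <- partial1. field. auto.
  - replace (2 * (1 - q) * P / (1 + q ^ 3) - qpoch_inf q q / (1 + q ^ 3))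
      with ((2 * (1 - q) * P - qpoch_inf q q) / (1 + q ^ 3)) by (field; auto).
    apply cv_div; auto. apply cv_minus. apply cv_const. apply cv_shift'. apply R_lim. apply cv_const.
Qed.

End Part1.

Section Part2.
Variable q : C.
Hypothesis hq : (Cmod q < 1)%R.

Let E N := qpoch (- q ^ 2) (q ^ 2) N.
Let D N := qpoch q (q ^ 2) N.
Let G N := qpoch (q ^ 2) (q ^ 2) N.
Let z (x : C) := 1 - q + q * x.
Let W N := z (q ^ (2 * N)) * E N / D N.
Let u (n : nat) := qpoch (- q ^ 2) (q ^ 2) n * q ^ (4 * n + 2) / qpoch q (q ^ 2) (n + 1).
Let P := qpoch_inf (q ^ 4) (q ^ 4).
Let Q := qpoch_inf (q ^ 2) q.

Lemma q2_le1 : (Cmod (q ^ 2) <= 1)%R.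
Proof. left; apply Cmod_pow_lt1; auto. Qed.

Lemma D_nz N : D N <> 0.
Proof. apply qpoch_nz; auto. apply q2_le1. Qed.

Lemma G_nz N : G N <> 0.
Proof. apply qpoch_nz. apply Cmod_pow_lt1; auto. apply q2_le1. Qed.

Lemma qX_nz N : 1 - q * q ^ (2 * N) <> 0.
Proof.
  apply one_minus_nz. rewrite <- Cpow_S. apply Cmod_pow_lt1; auto. lia.
Qed.

Lemma step2 N : (1 + q ^ 3) * u N = W (S N) - W N.
Proof.
  pose proof (D_nz N) as HD. pose proof (qX_nz N) as HX.
  unfold u, W. fold (E N). fold (D N).
  replace (N + 1)%nat with (S N) by lia.
  unfold E, D. rewrite !qpoch_S. fold (E N). fold (D N).
  rewrite <- (Cpow_mult_r q 2 N).
  replace (q ^ (2 * S N)) with (q ^ 2 * q ^ (2 * N)) by (rewrite <- Cpow_add_r; f_equal; lia).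
  replace (q ^ (4 * N + 2)) with (q ^ 2 * q ^ (2 * N) * q ^ (2 * N)) by (rewrite <- !Cpow_add_r; f_equal; lia).
  set (X := q ^ (2 * N)) in *. unfold z. field. split; auto.
Qed.

Lemma W0 : W 0 = 1.
Proof. unfold W, z, E, D. simpl. field. Qed.

Lemma partial2 N : (1 + q ^ 3) * sum_n u N = W (S N) - 1.
Proof.
  induction N.
  - rewrite sum_O. rewrite step2, W0. ring.
  - rewrite sum_Sn. change (plus (sum_n u N) (u (S N))) with (sum_n u N + u (S N)).
    rewrite Cmult_plus_distr_l, IHN, step2. ring.
Qed.

Lemma W_alt N : W N = z (q ^ (2 * N)) * (qpoch (q ^ 4) (q ^ 4) N * (1 - q * q ^ (2 * N)))
                      / ((1 - q) * qpoch (q ^ 2) q (2 * N)).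
Proof.
  pose proof (D_nz N) as HD. pose proof (qX_nz N) as HX. pose proof (G_nz N) as HG.
  assert (H1 : (1 - q) * qpoch (q ^ 2) q (2 * N) = D N * G N * (1 - q * q ^ (2 * N))).
  { unfold D, G. rewrite qpoch_D_G. rewrite <- qpoch_S. rewrite qpoch_shift.
    replace (q * q) with (q ^ 2) by ring. reflexivity. }
  rewrite H1, <- qpoch_E_G. unfold W. fold (E N). fold (G N). field. auto.
Qed.

Lemma W_lim : cv W (P / Q).
Proof.
  assert (HQ : Q <> 0) by (apply qpoch_inf_nz; auto; apply Cmod_pow_lt1; auto; lia).
  assert (H1q : 1 - q <> 0) by (apply one_minus_nz; auto).
  apply cv_ext with (u := fun N => z (q ^ (2 * N)) * (qpoch (q ^ 4) (q ^ 4) N * (1 - q * q ^ (2 * N)))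
                      / ((1 - q) * qpoch (q ^ 2) q (2 * N))).
  intros; symmetry; apply W_alt.
  replace (P / Q) with (z 0 * (P * (1 - q * 0)) / ((1 - q) * Q)) by (unfold z; field; auto).
  assert (HX : cv (fun N => q ^ (2 * N)) 0) by (apply (pow_lim_sub q 1); auto).
  apply cv_div.
  - apply cv_mult. unfold z. apply cv_plus. apply cv_const. apply cv_mult. apply cv_const. auto.
    apply cv_mult. apply qpoch_inf_cv. apply Cmod_pow_lt1; auto; lia.
    apply cv_minus. apply cv_const. apply cv_mult. apply cv_const. auto.
  - apply cv_mult. apply cv_const.
    apply (cv_subseq (qpoch (q ^ 2) q) _ (fun N => (2 * N)%nat)). intros; lia. apply qpoch_inf_cv; auto.
  - apply Cmult_neq_0; auto.
Qed.

Lemma part2 : exists S : C, is_series u S /\ (1 + q ^ 3) * S = P / Q - 1.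
Proof.
  assert (H3 : 1 + q ^ 3 <> 0) by (apply one_plus_nz, Cmod_pow_lt1; auto; lia).
  assert (HQ : Q <> 0) by (apply qpoch_inf_nz; auto; apply Cmod_pow_lt1; auto; lia).
  exists ((P / Q - 1) / (1 + q ^ 3)). split; [|field; auto].
  apply cv_filterlim.
  apply cv_ext with (u := fun N => (W (S N) - 1) / (1 + q ^ 3)).
  - intros N. change (@sum_n _ u N) with (@sum_n C_AbelianMonoid u N). rewrite <- partial2. field. auto.
  - apply cv_div; auto. apply cv_minus. apply cv_shift'. apply W_lim. apply cv_const. apply cv_const.
Qed.

End Part2.

Theorem theorem2 (q : C) (hq : (Cmod q < 1)%R) :
  is_series
    (fun n : nat => q ^ (2 * n) * qpoch_inf (q ^ (4 * n + 4)) (q ^ 4)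
                    * qpoch q q (2 * n + 1))
    (2 * (1 - q) * qpoch_inf (q ^ 4) (q ^ 4) / (1 + q ^ 3)
     - qpoch_inf q q / (1 + q ^ 3))
  /\
  exists S : C,
    is_series
      (fun n : nat => qpoch (- q ^ 2) (q ^ 2) n * q ^ (4 * n + 2)
                      / qpoch q (q ^ 2) (n + 1)) S
    /\ (1 + q ^ 3) * S = qpoch_inf (q ^ 4) (q ^ 4) / qpoch_inf (q ^ 2) q - 1.
Proof.
  split. apply part1; auto. apply part2; auto.
Qed.
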